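(* Let $\gamma>0$ and let $\mathbf a$ be given by $a_0=0$ and $a_i=i^{-\gamma}$ for $i\ge 1$. Then $f^{\mathbf a}$ satisfies the density axiom, and $f^{\mathbf a}$ satisfies the size axiom if and only if $\gamma\le 1$.
   Context: Graphs are finite directed graphs; $d_G(x,y)$ is the shortest directed path length from $x$ to $y$ ($\infty$ if none). For $\mathbf a\in\mathbb{R}^{\mathbb{N}}$ the linear centrality is $f^{\mathbf a}_G(i)=\sum_{k\ge 0}|\{j: d_G(j,i)=k\}|\,a_k$ (only finite distances counted). For positive integers $k,p$: a $k$-clique has $k$ nodes with arcs in both directions between every pair of distinct nodes; a directed $p$-cycle has nodes $z_0,\dots,z_{p-1}$ with arcs $z_j\to z_{j+1\bmod p}$. Let $x$ be a clique node and $y$ a cycle node. $S$ is the disjoint union of the $k$-clique and the $p$-cycle; $S_{xy}$ is $S$ plus the arcs $x\to y$ and $y\to x$. Density axiom: for every $k\ge3$ and $p=k$, $f_{S_{xy}}(x)>f_{S_{xy}}(y)$. Size axiom: for every fixed $p$ there is $k_0$ with $f_S(x)>f_S(y)$ for all $k\ge k_0$, and for every fixed $k$ there is $p_0$ with $f_S(x)<f_S(y)$ for all $p\ge p_0$. *)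

(* Defs.v *)
From mathcomp Require Import all_boot all_order all_algebra.
From mathcomp Require Import reals exp.
Set Implicit Arguments. Unset Strict Implicit. Unset Printing Implicit Defensive.
Import Order.TTheory GRing.Theory Num.Theory.
Local Open Scope ring_scope.

Fixpoint walk (T : finType) (e : rel T) (n : nat) (u v : T) : bool :=
  match n with
  | 0 => u == v
  | n'.+1 => [exists z, e u z && walk e n' z v]
  end.

Definition is_dist (T : finType) (e : rel T) (k : nat) (u v : T) : bool :=
  walk e k u v && [forall m : 'I_k, ~~ walk e m u v].

(* Linear centrality f^a_G(i) = sum_k |{j : d_G(j,i) = k}| a_k.
   All finite distances are < #|T|, so the series is the finite sum below. *)
Definition lin_cent (R : realType) (a : nat -> R) (T : finType) (e : rel T) (i : T) : R :=
  \sum_(k < #|T|) (#|[set j | is_dist e k j i]|)%:R * a k.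

(* S: disjoint union of the k-clique ('I_k) and the directed p-cycle ('I_p). *)
Definition S_rel (k p : nat) : rel ('I_k + 'I_p)%type :=
  fun u v =>
    match u, v with
    | inl a, inl b => a != b
    | inr a, inr b => (a.+1 %% p == b)%N
    | _, _ => false
    end.

Definition Sxy_rel (k p : nat) (x : 'I_k) (y : 'I_p) : rel ('I_k + 'I_p)%type :=
  fun u v => [|| S_rel u v, (u == inl x) && (v == inr y) | (u == inr y) && (v == inl x)].

Definition centrality (R : realType) := forall T : finType, rel T -> T -> R.

Definition density_axiom (R : realType) (f : centrality R) : Prop :=
  forall (k : nat) (x : 'I_k) (y : 'I_k), (3 <= k)%N ->
    f _ (@Sxy_rel k k x y) (inl x) > f _ (@Sxy_rel k k x y) (inr y).

Definition size_axiom (R : realType) (f : centrality R) : Prop :=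
  (forall p : nat, (0 < p)%N -> exists k0 : nat, forall k : nat, (k0 <= k)%N ->
     forall (x : 'I_k) (y : 'I_p), f _ (@S_rel k p) (inl x) > f _ (@S_rel k p) (inr y))
  /\
  (forall k : nat, (0 < k)%N -> exists p0 : nat, forall p : nat, (p0 <= p)%N ->
     forall (x : 'I_k) (y : 'I_p), f _ (@S_rel k p) (inl x) < f _ (@S_rel k p) (inr y)).

Definition apow (R : realType) (gamma : R) (i : nat) : R :=
  if i == 0%N then 0 else powR (i%:R) (- gamma).

(* Main.v *)
Require Import Defs.
From mathcomp Require Import all_boot all_order all_algebra.
From mathcomp Require Import reals exp sequences.
From mathcomp Require Import zify ring lra.
Set Implicit Arguments. Unset Strict Implicit. Unset Printing Implicit Defensive.
Import Order.TTheory GRing.Theory Num.Theory.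
Local Open Scope ring_scope.



Section Graph.
Variables (T : finType) (e : rel T).

Lemma walk_cat m n u w v : walk e m u w -> walk e n w v -> walk e (m + n) u v.
Proof.
elim: m u => [|m IH] u /=; first by move/eqP->.
move=> /existsP [z /andP [euz wz]] wv; apply/existsP; exists z.
by rewrite euz (IH _ wz wv).
Qed.

Lemma walk_closed (P : pred T) m u v :
  (forall u v, e u v -> ~~ P u -> ~~ P v) -> walk e m u v -> ~~ P u -> ~~ P v.
Proof.
move=> cl; elim: m u => [|m IH] u /=; first by move/eqP->.
move=> /existsP [z /andP [euz wz]] Pu; exact: (IH _ wz (cl _ _ euz Pu)).
Qed.

Lemma walk_pot (P : pred T) (phi : T -> nat) i m u :
  (forall u v, e u v -> (phi u <= (phi v).+1)%N) -> phi i = 0%N ->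
  walk e m u i -> (phi u <= m)%N.
Proof.
move=> arc phi0; elim: m u => [|m IH] u /=; first by move/eqP->; rewrite phi0.
move=> /existsP [z /andP [euz wz]].
by apply: leq_trans (arc _ _ euz) _; rewrite ltnS IH.
Qed.

Lemma is_dist_pot (phi : T -> nat) i j k :
  (forall u v, e u v -> (phi u <= (phi v).+1)%N) -> phi i = 0%N ->
  walk e (phi j) j i -> is_dist e k j i = (k == phi j).
Proof.
move=> arc phi0 wj; rewrite /is_dist.
have pot := @walk_pot pred0 phi i _ _ arc phi0.
apply/idP/eqP.
  case/andP=> wk /forallP al.
  have le1 := pot _ _ wk.
  apply/eqP; rewrite eqn_leq le1 andbT leqNgt; apply/negP => lt.
  by have := al (Ordinal lt); rewrite wj.
move=> ->; rewrite wj /=; apply/forallP => m; apply/negP => wm.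
by have := pot _ _ wm; rewrite leqNgt ltn_ord.
Qed.

Lemma not_dist (P : pred T) i j k :
  (forall u v, e u v -> ~~ P u -> ~~ P v) -> P i -> ~~ P j -> is_dist e k j i = false.
Proof.
move=> cl Pi Pj; apply/negP => /andP [w _].
by have := walk_closed cl w Pj; rewrite Pi.
Qed.

Lemma lin_cent_formula (R : realType) (a : nat -> R) i (phi : T -> nat) (P : pred T) :
  (forall u v, e u v -> (phi u <= (phi v).+1)%N) -> phi i = 0%N ->
  P i -> (forall u v, e u v -> ~~ P u -> ~~ P v) ->
  (forall j, P j -> walk e (phi j) j i) -> (forall j, P j -> (phi j < #|T|)%N) ->
  lin_cent a e i = \sum_(j | P j) a (phi j).
Proof.
move=> arc phi0 Pi cl wal lt.
rewrite /lin_cent.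
transitivity (\sum_(k < #|T|) \sum_j (if is_dist e k j i then a k else 0)).
  apply: eq_bigr => k _; rewrite mulr_natl -sumr_const big_mkcond /=.
  by apply: eq_bigr => j _; rewrite inE.
rewrite exchange_big /= [RHS]big_mkcond /=; apply: eq_bigr => j _.
case: ifP => Pj.
  rewrite (bigD1 (Ordinal (lt _ Pj))) //= (is_dist_pot _ arc phi0 (wal _ Pj)) eqxx.
  rewrite big1 ?addr0 // => k /negbTE nk.
  rewrite (is_dist_pot _ arc phi0 (wal _ Pj)).
  by case: eqP => // ek; case/eqP: nk; apply/val_inj.
by rewrite big1 // => k _; rewrite (not_dist _ cl Pi) ?Pj.
Qed.
End Graph.



Definition cyc (p y b : nat) : nat := if (b <= y)%N then (y - b)%N else (y + p - b)%N.

Lemma walk_sub (T : finType) (e e' : rel T) n u v :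
  (forall u v, e u v -> e' u v) -> walk e n u v -> walk e' n u v.
Proof.
move=> sub; elim: n u => [|n IH] u //= /existsP [z /andP [ez wz]].
by apply/existsP; exists z; rewrite sub // IH.
Qed.

Lemma cyc_walk k p n (b y : 'I_p) : ((b + n) %% p)%N = y ->
  walk (@S_rel k p) n (inr b) (inr y).
Proof.
elim: n b => [|n IH] b /=.
  by rewrite addn0 modn_small // => eby; apply/eqP; congr inr; apply: val_inj.
move=> H; have p0 : (0 < p)%N by case: (b) => /= m; lia.
apply/existsP; exists (inr (Ordinal (ltn_pmod b.+1 p0))); rewrite /= eqxx /=.
by apply: IH => /=; rewrite modnDml -H addSnnS.
Qed.

Lemma cyc_lt p (y b : 'I_p) : (cyc p y b < p)%N.
Proof. case: y b => y ? [b ?] /=; rewrite /cyc; case: (leqP b y) => ?; lia. Qed.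

Lemma cyc_walk' k p (b y : 'I_p) : walk (@S_rel k p) (cyc p y b) (inr b) (inr y).
Proof.
apply: cyc_walk; rewrite /cyc; case: (leqP b y) => h.
  by rewrite subnKC // modn_small.
rewrite addnBA; last by case: y b h => y ? [b ?] /=; lia.
by rewrite addKn modnDr modn_small.
Qed.

Lemma cyc_arc p (u v y : 'I_p) : (u.+1 %% p)%N = v ->
  (cyc p y u <= (cyc p y v).+1)%N.
Proof.
case: u v y => u hu [v hv] [y hy] /= H.
have [lt|ge] := ltnP u.+1 p.
  move: H; rewrite modn_small // => <-; rewrite /cyc.
  by case: (leqP u y) => ?; case: (leqP u.+1 y) => ?; lia.
have up : u.+1 = p by lia.
move: H; rewrite up modnn => <-; rewrite /cyc.
case: (leqP u y) => ?; rewrite /= ?subn0; lia.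
Qed.

Lemma cyc_yy p (y : 'I_p) : cyc p y y = 0%N.
Proof. by rewrite /cyc leqnn subnn. Qed.

Lemma cyc_sum (R : realType) (F : nat -> R) p (y : 'I_p) :
  \sum_(b < p) F (cyc p y b) = \sum_(d < p) F d.
Proof.
pose h (b : 'I_p) : 'I_p := Ordinal (cyc_lt y b).
have hinj : injective h.
  move=> [b1 h1] [b2 h2] /(congr1 val) /=; rewrite /cyc.
  move: (ltn_ord y) => hy H; apply: val_inj => /=.
  by move: H; case: (leqP b1 y) => ?; case: (leqP b2 y) => ?; lia.
by rewrite [RHS](reindex_inj hinj).
Qed.

Lemma sum_if (R : realType) k (x : 'I_k) (A B : R) :
  \sum_(a < k) (if a == x then A else B) = A + B *+ k.-1.
Proof.
rewrite (bigD1 x) //= eqxx; congr (_ + _).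
rewrite (eq_bigr (fun _ => B)); last by move=> i /negbTE ->.
by rewrite sumr_const cardC1 card_ord.
Qed.



Section Inst.
Variables (R : realType) (a : nat -> R).

Lemma fS_x k p (x : 'I_k) (y : 'I_p) : a 0 = 0 ->
  lin_cent a (@S_rel k p) (inl x) = a 1 *+ k.-1.
Proof.
move=> a0.
pose phi (u : 'I_k + 'I_p) : nat := if u is inl c then (if c == x then 0 else 1)%N else 0%N.
pose P (u : 'I_k + 'I_p) : bool := if u is inl _ then true else false.
rewrite (@lin_cent_formula _ _ _ _ _ phi P).
- rewrite big_sumType /= [X in _ + X]big1 // addr0.
  by rewrite (eq_bigr (fun c => if c == x then a 0 else a 1)) ?sum_if ?a0 ?add0r // => c _; rewrite /phi; case: eqP.
- by move=> [c|c] [d|d] //=; rewrite /phi; do 2 case: eqP.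
- by rewrite /phi eqxx.
- by [].
- by move=> [c|c] [d|d].
- move=> [c|c] //= _; rewrite /phi; case: eqP => [->|/eqP ne] //=.
  by apply/existsP; exists (inl x); rewrite /= ne /=.
- move=> [c|c] //= _; rewrite card_sum !card_ord /phi; case: eqP => _;
  move: (ltn_ord x) (ltn_ord y); lia.
Qed.

Lemma fS_y k p (x : 'I_k) (y : 'I_p) :
  lin_cent a (@S_rel k p) (inr y) = \sum_(d < p) a d.
Proof.
pose phi (u : 'I_k + 'I_p) : nat := if u is inr c then cyc p y c else 0%N.
pose P (u : 'I_k + 'I_p) : bool := if u is inr _ then true else false.
rewrite (@lin_cent_formula _ _ _ _ _ phi P).
- by rewrite big_sumType /= big1 ?add0r ?cyc_sum.
- move=> [c|c] [d|d] //= /eqP; exact: cyc_arc.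
- exact: cyc_yy.
- by [].
- by move=> [c|c] [d|d].
- move=> [c|c] //= _; exact: cyc_walk'.
- move=> [c|c] //= _; rewrite card_sum !card_ord; move: (cyc_lt y c); lia.
Qed.

Lemma fSxy_x k (x y : 'I_k) :
  lin_cent a (Sxy_rel x y) (inl x) = a 0 + a 1 *+ k.-1 + \sum_(d < k) a d.+1.
Proof.
pose phi (u : 'I_k + 'I_k) : nat :=
  match u with inl c => if c == x then 0 else 1 | inr c => (cyc k y c).+1 end%N.
rewrite (@lin_cent_formula _ _ _ _ _ phi predT).
- rewrite big_sumType /=; congr (_ + _); last by rewrite (cyc_sum (fun d => a d.+1)).
  by rewrite (eq_bigr (fun c => if c == x then a 0 else a 1)) ?sum_if // => c _; rewrite /phi; case: eqP.
- move=> [c|c] [d|d]; rewrite /Sxy_rel /S_rel /phi /=.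
  + by move=> _; case: (c == x); case: (d == x).
  + by move=> _; case: (c == x).
  + by case/andP => /eqP [->] _; rewrite cyc_yy.
  + by case/orP => [/eqP/cyc_arc h|/andP [_ /eqP //]]; rewrite ltnS.
- by rewrite /phi eqxx.
- by [].
- by [].
- move=> [c|c] _; rewrite /phi.
    case: eqP => [->|/eqP ne] //=.
    by apply/existsP; exists (inl x); rewrite /= /Sxy_rel /= ne /=.
  rewrite -addn1; apply: (@walk_cat _ _ _ _ _ (inr y)).
    by apply: (walk_sub _ (cyc_walk' k c y)) => u v h; rewrite /Sxy_rel h.
  by apply/existsP; exists (inl x); rewrite /Sxy_rel /= !eqxx ?orbT.
- move=> [c|c] _ /=; rewrite card_sum !card_ord /phi.
    by case: eqP => _; move: (ltn_ord x) (ltn_ord y); lia.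
  by move: (cyc_lt y c); lia.
Qed.

Lemma fSxy_y k (x y : 'I_k) : (2 <= k)%N ->
  lin_cent a (Sxy_rel x y) (inr y) = a 1 + a 2 *+ k.-1 + \sum_(d < k) a d.
Proof.
pose phi (u : 'I_k + 'I_k) : nat :=
  match u with inl c => if c == x then 1 else 2 | inr c => cyc k y c end%N.
move=> hk.
rewrite (@lin_cent_formula _ _ _ _ _ phi predT).
- rewrite big_sumType /=; congr (_ + _); last by rewrite cyc_sum.
  by rewrite (eq_bigr (fun c => if c == x then a 1 else a 2)) ?sum_if // => c _; rewrite /phi; case: eqP.
- move=> [c|c] [d|d]; rewrite /Sxy_rel /S_rel /phi /=.
  + by move=> _; case: (c == x); case: (d == x).
  + by rewrite orbF => /andP [/eqP [->] _]; rewrite eqxx.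
  + by case/andP => /eqP [->] _; rewrite cyc_yy.
  + by case/orP => [/eqP/cyc_arc h|/andP [_ /eqP //]].
- by rewrite /phi cyc_yy.
- by [].
- by [].
- move=> [c|c] _; rewrite /phi.
    have wx : walk (Sxy_rel x y) 1 (inl x) (inr y).
      by apply/existsP; exists (inr y); rewrite /Sxy_rel /= !eqxx /=.
    case: eqP => [->|/eqP ne] //.
    rewrite -[2%N]/(1 + 1)%N; apply: (walk_cat _ wx).
    by apply/existsP; exists (inl x); rewrite /= /Sxy_rel /= ne /=.
  by apply: (walk_sub _ (cyc_walk' k c y)) => u v h; rewrite /Sxy_rel h.
- move=> [c|c] _ /=; rewrite card_sum !card_ord /phi.
    by case: eqP => _; move: (ltn_ord x) (ltn_ord y); lia.
  by move: (cyc_lt y c); lia.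
Qed.
End Inst.



Section Real.
Variables (R : realType) (gamma : R).
Hypothesis hg : 0 < gamma.
Local Notation a := (apow gamma).

Lemma a0 : a 0 = 0. Proof. by []. Qed.

Lemma aE m : (0 < m)%N -> a m = expR (- gamma * ln m%:R).
Proof.
by move=> m0; rewrite /apow /powR; case: m m0 => // m _ /=; rewrite pnatr_eq0.
Qed.

Lemma a1 : a 1 = 1. Proof. by rewrite aE // ln1 mulr0 expR0. Qed.

Lemma a_ge0 m : 0 <= a m.
Proof. by case: m => [|m]; rewrite ?a0 // aE // expR_ge0. Qed.

Lemma a_le1 m : a m <= 1.
Proof.
case: m => [|m]; rewrite ?a0 // aE // expR_le1 mulNr oppr_le0.
by apply: mulr_ge0; [exact: ltW | rewrite ln_ge0 // ler1n].
Qed.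

Lemma ln_pos m : (0 < m)%N -> 0 <= ln (m%:R : R).
Proof. by move=> m0; rewrite ln_ge0 // ler1n. Qed.

Lemma bern_weak (t : R) n : 0 <= t -> 1 + n%:R * (t - 1) <= t ^+ n.
Proof.
move=> t0; elim: n => [|n IH]; first by rewrite mul0r addr0 expr0.
rewrite exprS.
have h1 : 0 <= t * (t ^+ n - (1 + n%:R * (t - 1))) by rewrite mulr_ge0 // subr_ge0.
have h2 : 0 <= n%:R * (t - 1) ^+ 2 by rewrite mulr_ge0 // sqr_ge0.
rewrite -natr1; nra.
Qed.

Lemma bern_strict (t : R) n : 0 <= t -> t < 1 -> 1 + (n.+2)%:R * (t - 1) < t ^+ n.+2.
Proof.
move=> t0 t1; rewrite exprS.
have IH := bern_weak n.+1 t0.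
have h1 : 0 <= t * (t ^+ n.+1 - (1 + n.+1%:R * (t - 1))) by rewrite mulr_ge0 // subr_ge0.
have h2 : 0 < n.+1%:R * (t - 1) ^+ 2.
  by rewrite mulr_gt0 // exprn_even_gt0 //= subr_eq0 lt_eqF.
rewrite -[n.+2]addn1 natrD; nra.
Qed.

Lemma density_ineq k : (3 <= k)%N ->
  1 + a 2 *+ k.-1 < (k.-1)%:R + a k.
Proof.
move=> hk; set n := k.-1.
have kn : k = n.+1 by rewrite /n; lia.
set t := a 2.
have t0 : 0 <= t := a_ge0 2.
have t1 : t < 1.
  by rewrite /t aE // expR_lt1 mulNr oppr_lt0 mulr_gt0 // ln_gt0 // ltr1n.
have akt : t ^+ n <= a k.
  rewrite /t !aE //; last by lia.
  rewrite -expRM_natl ler_expR.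
  have hl : ln (k%:R : R) <= n%:R * ln 2.
    rewrite mulr_natl -lnXn // ler_ln ?posrE ?exprn_gt0 ?ltr0n //; last by lia.
    rewrite -natrX ler_nat kn; have := ltn_expl n (isT : (1 < 2)%N); lia.
  have := mulr_ge0 (ltW hg) ((eqbRL (subr_ge0 _ _) hl)); nra.
have [m nm] : exists m, n = m.+2 by exists (n - 2)%N; lia.
have := bern_strict m t0 t1; rewrite -nm => hb.
rewrite -mulr_natl; lra.
Qed.

Lemma expRln m : (0 < m)%N -> expR (ln (m%:R : R)) = m%:R.
Proof. by move=> m0; rewrite lnK // posrE ltr0n. Qed.

Lemma a_ge_inv m : gamma <= 1 -> (0 < m)%N -> (m%:R : R)^-1 <= a m.
Proof.
move=> hle m0; rewrite aE // -{1}(expRln m0) -expRN ler_expR.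
have := ln_pos m0; nra.
Qed.

Lemma ln_succ m : (0 < m)%N -> ln ((m.+1)%:R : R) <= ln (m%:R : R) + (m%:R)^-1.
Proof.
move=> m0; have mp : 0 < (m%:R : R) by rewrite ltr0n.
have -> : (m.+1%:R : R) = m%:R * (1 + (m%:R)^-1).
  by rewrite mulrDr mulr1 mulfV ?gt_eqF // -natr1.
rewrite lnM ?posrE //; last by rewrite addr_gt0 ?invr_gt0.
rewrite lerD2l le_ln1Dx //; apply: (@lt_le_trans _ _ 0); rewrite ?invr_ge0 ?ltW //.
by rewrite ltrN10.
Qed.

Lemma harm_lb n : gamma <= 1 -> ln ((n.+1)%:R : R) <= \sum_(d < n.+1) a d.
Proof.
move=> hle; elim: n => [|n IH]; first by rewrite big_ord1 ln1 a0.
rewrite big_ord_recr /=.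
have := ln_succ (isT : (0 < n.+1)%N).
have := a_ge_inv hle (isT : (0 < n.+1)%N).
move=> h1 h2; apply: (le_trans h2); exact: lerD.
Qed.

Lemma sum_le_p p : \sum_(d < p) a d <= p%:R.
Proof.
rewrite -[X in _ <= X%:R](card_ord p) -sumr_const.
by apply: ler_sum => d _; exact: a_le1.
Qed.

Lemma ub_step n : 1 < gamma ->
  (gamma - 1) * a n.+2 + expR (- (gamma - 1) * ln (n.+2%:R : R))
    <= expR (- (gamma - 1) * ln (n.+1%:R : R)).
Proof.
move=> hgt; set t := gamma - 1; set L := ln (n.+2%:R : R); set L' := ln (n.+1%:R : R).
set b2 := expR (- t * L).
have t0 : 0 < t by rewrite /t subr_gt0.
have np : 0 < (n.+2%:R : R) by rewrite ltr0n.
have eA : a n.+2 = b2 * (n.+2%:R)^-1.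
  have eN : expR (- L) = (n.+2%:R)^-1 by rewrite expRN /L expRln.
  rewrite aE // -/L /b2 -eN -expRD; congr expR.
  by rewrite /t; ring.
have eB : expR (- t * L') = b2 * expR (t * (L - L')).
  by rewrite /b2 -expRD; congr expR; ring.
have ex := expR_ge1Dx (t * (L - L')).
have hLL : (n.+2%:R)^-1 <= L - L'.
  rewrite /L'; have -> : (n.+1%:R : R) = n.+2%:R * (1 + - (n.+2%:R)^-1).
    rewrite mulrDr mulr1 mulrN mulfV ?gt_eqF //.
    by rewrite -[n.+2]addn1 natrD addrK.
  rewrite lnM ?posrE //; last first.
    rewrite subr_gt0 invf_lt1 // ltr1n //.
  have : ln (1 + - (n.+2%:R : R)^-1) <= - (n.+2%:R)^-1.
    by apply: le_ln1Dx; rewrite ltrN2 invf_lt1 // ltr1n.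
  by rewrite /L opprD addrA subrr add0r lerNr.
have b20 : 0 < b2 by apply: expR_gt0.
rewrite eA eB.
have h1 : 0 <= b2 * (t * (L - L') - t * (n.+2%:R)^-1).
  by apply: mulr_ge0; [exact: ltW | rewrite subr_ge0 ler_pM2l].
have h2 : 0 <= b2 * (expR (t * (L - L')) - (1 + t * (L - L'))).
  by apply: mulr_ge0; [exact: ltW | rewrite subr_ge0].
rewrite -subr_ge0; have := addr_ge0 h1 h2.
suff -> : b2 * (t * (L - L') - t / n.+2%:R) + b2 * (expR (t * (L - L')) - (1 + t * (L - L')))
  = b2 * expR (t * (L - L')) - (t * (b2 / n.+2%:R) + b2) by [].
ring.
Qed.

Lemma sum_ub p : 1 < gamma -> \sum_(d < p) a d <= 1 + (gamma - 1)^-1.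
Proof.
move=> hgt; set t := gamma - 1.
have t0 : 0 < t by rewrite /t subr_gt0.
have ti : 0 < t^-1 by rewrite invr_gt0.
have claim : forall n, \sum_(d < n.+2) a d <=
    1 + t^-1 - expR (- t * ln (n.+1%:R : R)) / t.
  elim=> [|n IH].
    rewrite big_ord_recr big_ord1 /= a0 a1 ln1 mulr0 expR0 mul1r; lra.
  rewrite big_ord_recr /=.
  have := ub_step n hgt; rewrite -/t => hs.
  set B1 := expR (- t * ln (n.+1%:R : R)) in IH hs *.
  set B2 := expR (- t * ln (n.+2%:R : R)) in hs *.
  have e : a n.+2 + B2 / t = (t * a n.+2 + B2) / t.
    by field; rewrite gt_eqF.
  have hs2 : (t * a n.+2 + B2) / t <= B1 / t by rewrite ler_pM2r.
  rewrite -e in hs2.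
  apply: (le_trans (lerD IH (lexx (a n.+2)))).
  move: hs2; clearbody B1 B2; move: (B1 / t) (B2 / t) (a n.+2) => u v w; lra.
case: p => [|[|n]]; first by rewrite big_ord0; lra.
  by rewrite big_ord1 a0; lra.
apply: (le_trans (claim n)).
have : 0 <= expR (- t * ln (n.+1%:R : R)) / t by rewrite divr_ge0 ?expR_ge0 ?ltW.
move: (expR (- t * ln (n.+1%:R : R)) / t) => u; lra.
Qed.
End Real.

Unset Implicit Arguments.


Theorem corollary1 (R : realType) (gamma : R) (hgamma : 0 < gamma) :
  density_axiom (lin_cent (apow gamma)) /\
  (size_axiom (lin_cent (apow gamma)) <-> gamma <= 1).
Proof.
have A0 : apow gamma 0 = 0 by [].
have A1 : apow gamma 1 = 1 := a1 _.
split.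
  move=> k x y hk /=.
  rewrite fSxy_x fSxy_y; last by lia.
  have tel : \sum_(d < k) apow gamma d.+1 = \sum_(d < k) apow gamma d + apow gamma k.
    have e1 : \sum_(i < k.+1) apow gamma i = \sum_(i < k) apow gamma i + apow gamma k.
      by rewrite big_ord_recr.
    have e2 : \sum_(i < k.+1) apow gamma i = apow gamma 0 + \sum_(i < k) apow gamma i.+1.
      by rewrite big_ord_recl.
    by rewrite -e1 e2 A0 add0r.
  have := density_ineq hgamma hk.
  rewrite tel A0 A1 -[1 *+ _]mulr_natl mulr1.
  move: (\sum_(d < k) apow gamma d) (apow gamma 2 *+ k.-1) (apow gamma k) (k.-1%:R : R) => s u v w.
  lra.
split.
  move=> [_ H2]; rewrite leNgt; apply/negP => hgt.
  have t0 : 0 < (gamma - 1)^-1 by rewrite invr_gt0 subr_gt0.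
  have hK := @archi_boundP _ (1 + (gamma - 1)^-1) (ltW (addr_gt0 ltr01 t0)).
  have [p0 Hp] := H2 (Num.Def.archi_bound (1 + (gamma - 1)^-1)).+1 isT.
  set x0 : 'I_(Num.Def.archi_bound (1 + (gamma - 1)^-1)).+1 := ord0.
  set y0 : 'I_p0.+1 := ord0.
  have := Hp p0.+1 (leqnSn _) x0 y0.
  rewrite /= (@fS_x _ _ _ _ x0 y0 A0) (@fS_y _ _ _ _ x0 y0) A1 -[1 *+ _]mulr_natl mulr1.
  have := @sum_ub _ gamma p0.+1 hgt.
  move: (\sum_(d < p0.+1) apow gamma d) => s; lra.
move=> hle; split.
  move=> p p0; exists p.+2 => k hk x y /=.
  rewrite (@fS_x _ _ _ _ x y A0) (@fS_y _ _ _ _ x y) A1 -[1 *+ _]mulr_natl mulr1.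
  apply: (le_lt_trans (@sum_le_p _ gamma hgamma p)); rewrite ltr_nat; lia.
move=> k k0; exists (Num.Def.archi_bound (expR (k%:R : R))) => p hp x y /=.
rewrite (@fS_x _ _ _ _ x y A0) (@fS_y _ _ _ _ x y) A1 -[1 *+ _]mulr_natl mulr1.
have hN := @archi_boundP _ (expR (k%:R : R)) (expR_ge0 _).
case: p hp x y => [|p] hp x y; first by case: y.
apply: (lt_le_trans _ (@harm_lb _ gamma p hle)).
have Np : 0 < ((Num.Def.archi_bound (expR (k%:R : R)))%:R : R).
  by apply: lt_trans hN; apply: expR_gt0.
have : ln (expR (k%:R : R)) < ln (p.+1%:R : R).
  rewrite ltr_ln ?posrE ?expR_gt0 ?ltr0n //.
  by apply: (lt_le_trans hN); rewrite ler_nat.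
rewrite expRK => h; apply: le_lt_trans h; rewrite ler_nat; lia.
Qed.
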